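(* Let $\lambda$ be a partition with at most $N$ parts, $T$ a column-strict tableau of shape $\lambda$ and $\theta\in\mathsf M^{(N)}$ the matrix attached to $T$. Then $\psi_T(q,t)=c_N(\theta;t^{N-1}q^{\lambda_1},t^{N-2}q^{\lambda_2},\dots,q^{\lambda_N};q,t)$.
   Context: $(p;q)_n=(1-p)\cdots(1-q^{n-1}p)$, $n\in\mathbb N\cup\{\infty\}$. A tableau $T$ of shape $\lambda$ is a sequence $\emptyset=\lambda^{(0)}\subset\lambda^{(1)}\subset\dots\subset\lambda^{(N)}=\lambda$ of partitions with each $\lambda^{(k)}-\lambda^{(k-1)}$ a horizontal strip; its matrix is $\theta_{i,j}=\lambda^{(j)}_i-\lambda^{(j-1)}_i$ ($i<j$), an element of $\mathsf M^{(N)}$ (strictly upper triangular nonnegative integer matrices). With $f(u)=(tu;q)_\infty/(qu;q)_\infty$, $\psi_{\lambda/\mu}=\prod_{1\le i\le j\le\ell(\mu)}\frac{f(q^{\mu_i-\mu_j}t^{j-i})f(q^{\lambda_i-\lambda_{j+1}}t^{j-i})}{f(q^{\lambda_i-\mu_j}t^{j-i})f(q^{\mu_i-\lambda_{j+1}}t^{j-i})}$ and $\psi_T=\prod_{k=1}^N\psi_{\lambda^{(k)}/\lambda^{(k-1)}}$. $c_N$: $c_1=1$, $c_N(\theta;z)=c_{N-1}(\theta';q^{-\theta_{1,N}}z_1,\dots,q^{-\theta_{N-1,N}}z_{N-1})\prod_{1\le i\le j\le N-1}\frac{(tz_{j+1}/z_i;q)_{\theta_{i,N}}}{(qz_{j+1}/z_i;q)_{\theta_{i,N}}}\frac{(q^{1-\theta_{j,N}}z_j/(tz_i);q)_{\theta_{i,N}}}{(q^{-\theta_{j,N}}z_j/z_i;q)_{\theta_{i,N}}}$,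 $\theta'$ the upper-left $(N-1)\times(N-1)$ block. *)

(* Defs.v *)
From HB Require Import structures.
From mathcomp Require Import all_boot all_order all_algebra.
From mathcomp Require Import all_classical all_reals topology normedtype sequences.
Set Implicit Arguments. Unset Strict Implicit. Unset Printing Implicit Defensive.
Import Order.TTheory GRing.Theory Num.Theory.
Import numFieldNormedType.Exports.
Local Open Scope ring_scope.

(* Partitions and tableaux are encoded 1-indexed as functions nat -> nat:
   p i = p_i for i >= 1 (the value at index 0 is irrelevant). *)

Definition is_partition (p : nat -> nat) : Prop :=
  (forall i, (0 < i)%N -> (p i.+1 <= p i)%N) /\
  exists n, forall i, (n < i)%N -> p i = 0%N.

Definition hstrip (lam mu : nat -> nat) : Prop :=
  forall i, (0 < i)%N -> (mu i <= lam i)%N /\ (lam i.+1 <= mu i)%N.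

(* L k = lambda^(k); a tableau of shape lam with entries in {1..N}. *)
Definition is_tableau (N : nat) (lam : nat -> nat) (L : nat -> nat -> nat) : Prop :=
  (forall i, (0 < i)%N -> L 0%N i = 0%N) /\
  (forall k, (0 < k <= N)%N -> is_partition (L k) /\ hstrip (L k) (L k.-1)) /\
  (forall i, (0 < i)%N -> L N i = lam i).

(* the matrix theta_{i,j} = lambda^(j)_i - lambda^(j-1)_i (used for i < j) *)
Definition tab_matrix (L : nat -> nat -> nat) (i j : nat) : nat := (L j i - L j.-1 i)%N.

Definition plen (N : nat) (p : nat -> nat) : nat := \sum_(1 <= i < N.+1) (p i != 0%N).

Section Defs.
Variable R : realType.

Definition qpoch (p q : R) (n : nat) : R := \prod_(k < n) (1 - q ^+ k * p).

Definition qpoch_inf (p q : R) : R := limn (fun n => qpoch p q n).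

Definition ff (q t u : R) : R := qpoch_inf (t * u) q / qpoch_inf (q * u) q.

Definition qt (q t : R) (a b : int) (k : nat) : R := q ^ (a - b) * t ^+ k.

Definition psi_skew (N : nat) (q t : R) (lam mu : nat -> nat) : R :=
  \prod_(1 <= i < (plen N mu).+1) \prod_(i <= j < (plen N mu).+1)
    ((ff q t (qt q t (mu i) (mu j) (j - i)) * ff q t (qt q t (lam i) (lam j.+1) (j - i)))
     / (ff q t (qt q t (lam i) (mu j) (j - i)) * ff q t (qt q t (mu i) (lam j.+1) (j - i)))).

Definition psi_tab (N : nat) (q t : R) (L : nat -> nat -> nat) : R :=
  \prod_(1 <= k < N.+1) psi_skew N q t (L k) (L k.-1).

(* c_N(theta; z; q, t); theta and z are 1-indexed *)
Fixpoint cN (q t : R) (N : nat) (th : nat -> nat -> nat) (z : nat -> R) : R :=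
  match N with
  | 0%N => 1
  | M.+1 =>
      cN q t M th (fun i => q ^- th i N * z i) *
      \prod_(1 <= i < M.+1) \prod_(i <= j < M.+1)
        ((qpoch (t * z j.+1 / z i) q (th i N) / qpoch (q * z j.+1 / z i) q (th i N)) *
         (qpoch (q * q ^- th j N * z j / (t * z i)) q (th i N) /
          qpoch (q ^- th j N * z j / z i) q (th i N)))
  end.

End Defs.

(* Main.v *)
Require Import Defs.
From HB Require Import structures.
From mathcomp Require Import all_boot all_order all_algebra.
From mathcomp Require Import all_classical all_reals topology normedtype sequences.
From mathcomp Require Import ring lra zify.
Import Order.TTheory GRing.Theory Num.Theory.
Import numFieldNormedType.Exports.
Local Open Scope ring_scope.

Section QP.
Variable R : realType.
Variable q : R.
Hypothesis q0 : 0 < q.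
Hypothesis q1 : q < 1.

Lemma qpochS (p : R) n : qpoch p q n.+1 = qpoch p q n * (1 - q ^+ n * p).
Proof. by rewrite /qpoch big_ord_recr. Qed.

Lemma qpoch0 (p : R) : qpoch p q 0 = 1.
Proof. by rewrite /qpoch big_ord0. Qed.

Lemma qpochD (p : R) n m : qpoch p q (n + m) = qpoch p q n * qpoch (q ^+ n * p) q m.
Proof.
have hq0 := q0; have hq1 := q1.
elim: m => [|m IH]; first by rewrite addn0 qpoch0 mulr1.
rewrite addnS !qpochS IH -mulrA; congr (_ * (_ * (1 - _))).
by rewrite exprD mulrA (mulrC (q ^+ n)).
Qed.

Lemma qpoch_neq0 (p : R) n : (forall k, q ^+ k * p != 1) -> qpoch p q n != 0.
Proof.
have hq0 := q0; have hq1 := q1.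
move=> h; elim: n => [|n IH]; first by rewrite qpoch0 oner_eq0.
by rewrite qpochS mulf_neq0 // subr_eq0 eq_sym.
Qed.

Lemma xq_ge0 m : 0 <= q ^+ m. Proof. by rewrite exprn_ge0 // ltW. Qed.
Lemma xq_le1 m : q ^+ m <= 1. Proof. by rewrite exprn_ile1 // ltW. Qed.

Lemma Qpos_low {a : R} : 0 <= a -> a <= (1 - q) / 2 -> forall m,
  (1 - q) * qpoch a q m >= (1 - q) - a + a * q ^+ m.
Proof.
have hq0 := q0; have hq1 := q1.
move=> a0 a1; elim=> [|m IH]; first by rewrite qpoch0 expr0 !mulr1 subrK.
rewrite qpochS exprSr.
have x0 := xq_ge0 m; have x1 := xq_le1 m.
set x := q ^+ m in x0 x1 IH *; set P := qpoch a q m in IH *; clearbody x P.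
have xa : x * a <= a by rewrite -[leRHS]mul1r ler_wpM2r.
have f0 : 0 <= 1 - x * a by lra.
have h1 : ((1 - q) * P - ((1 - q) - a + a * x)) * (1 - x * a) >= 0.
  by apply: mulr_ge0 => //; lra.
have h2 : a * a * x * (1 - x) >= 0.
  by apply: mulr_ge0; [apply: mulr_ge0 => //; apply: mulr_ge0 | lra].
nra.
Qed.

Lemma Qpos_half {a : R} : 0 <= a -> a <= (1 - q) / 2 -> forall m, 1 / 2 <= qpoch a q m.
Proof.
have hq0 := q0; have hq1 := q1.
move=> a0 a1 m; have := Qpos_low a0 a1 m; have := xq_ge0 m => x0 h.
have h3 : 0 <= a * q ^+ m by apply: mulr_ge0.
nra.
Qed.

Lemma Qpos_noninc {a : R} : 0 <= a -> a <= (1 - q) / 2 -> forall m, qpoch a q m.+1 <= qpoch a q m.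
Proof.
have hq0 := q0; have hq1 := q1.
move=> a0 a1 m; rewrite qpochS.
have := Qpos_half a0 a1 m; have := xq_ge0 m; have := xq_le1 m => x1 x0 h.
have h3 : 0 <= q ^+ m * a by apply: mulr_ge0.
nra.
Qed.

Lemma Qneg_ge1 {a : R} : a <= 0 -> forall m, 1 <= qpoch a q m.
Proof.
have hq0 := q0; have hq1 := q1.
move=> a0; elim=> [|m IH]; first by rewrite qpoch0.
rewrite qpochS; have := xq_ge0 m => x0.
have h3 : q ^+ m * a <= 0 by rewrite mulr_ge0_le0.
nra.
Qed.

Lemma Qneg_nondec {a : R} : a <= 0 -> forall m, qpoch a q m <= qpoch a q m.+1.
Proof.
have hq0 := q0; have hq1 := q1.
move=> a0 m; rewrite qpochS; have := Qneg_ge1 a0 m; have := xq_ge0 m => x0 h.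
have h3 : q ^+ m * a <= 0 by rewrite mulr_ge0_le0.
nra.
Qed.

Lemma Qneg_prod {b : R} : 0 <= b -> b <= 1 -> forall m,
  0 <= qpoch (- b) q m * qpoch b q m <= 1.
Proof.
have hq0 := q0; have hq1 := q1.
move=> b0 b1; elim=> [|m IH]; first by rewrite !qpoch0 mulr1; lra.
rewrite !qpochS; have := xq_ge0 m; have := xq_le1 m => x1 x0.
have h3 : 0 <= q ^+ m * b <= 1.
  by rewrite mulr_ge0 //=; rewrite -[1]mulr1 ler_pM.
set X := qpoch (- b) q m * qpoch b q m in IH.
have -> : qpoch (- b) q m * (1 - q ^+ m * - b) * (qpoch b q m * (1 - q ^+ m * b))
  = X * (1 - (q ^+ m * b) ^+ 2) by rewrite /X; ring.
set y := q ^+ m * b in h3 *.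
case/andP: h3 => h3a h3b.
have y0 : 0 <= 1 - y ^+ 2 by rewrite expr2; nra.
have y1 : 1 - y ^+ 2 <= 1 by rewrite expr2; nra.
case/andP: IH => i0 i1.
rewrite mulr_ge0 //=.
by rewrite -[leRHS]mulr1 ler_pM.
Qed.

Lemma Qneg_up {a : R} : a <= 0 -> - a <= (1 - q) / 2 -> forall m, qpoch a q m <= 2.
Proof.
have hq0 := q0; have hq1 := q1.
move=> a0 a1 m.
have := Qneg_prod (b := - a) (ltac:(lra)) (ltac:(lra)) m; rewrite opprK.
have := Qpos_half (a := - a) (ltac:(lra)) a1 m.
have := Qneg_ge1 a0 m.
move=> h1 h2 /andP[h3 h4]; nra.
Qed.

Lemma Qconv {a : R} : `|a| <= (1 - q) / 2 ->
  cvgn (fun m => qpoch a q m) /\ 0 < limn (fun m => qpoch a q m).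
Proof.
have hq0 := q0; have hq1 := q1.
move=> ha; case: (lerP 0 a) => a0.
  rewrite ger0_norm // in ha.
  have hc : cvgn (fun m => qpoch a q m).
    apply: nonincreasing_is_cvgn.
      by apply/nonincreasing_seqP => m; apply: Qpos_noninc.
    by exists 0 => _ [m _ <-]; have := Qpos_half a0 ha m; lra.
  split => //; apply: (@lt_le_trans _ _ (1/2)); first lra.
  by apply: limr_ge => //; apply: nearW => m; apply: Qpos_half.
rewrite ltr0_norm // in ha.
have a0' : a <= 0 by lra.
have hc : cvgn (fun m => qpoch a q m).
  apply: nondecreasing_is_cvgn.
    by apply/nondecreasing_seqP => m; apply: Qneg_nondec.
  by exists 2 => _ [m _ <-]; apply: Qneg_up.
split => //; apply: (@lt_le_trans _ _ 1); first lra.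
by apply: limr_ge => //; apply: nearW => m; apply: Qneg_ge1.
Qed.

Lemma bern K : q ^+ K * (1 + K%:R * (1 - q)) <= 1.
Proof.
have hq0 := q0; have hq1 := q1.
elim: K => [|K IH]; first by rewrite expr0 mul0r addr0 mulr1.
rewrite exprSr -natr1.
have x0 := xq_ge0 K; have x1 := xq_le1 K.
have h1 : q * (q ^+ K * (1 + K%:R * (1 - q))) <= q * 1 by rewrite ler_wpM2l // ltW.
have h2 : q ^+ K * q <= 1 by rewrite -[leRHS]mulr1 ler_pM // ltW.
have h3 : (q ^+ K * q) * (1 - q) <= 1 * (1 - q) by rewrite ler_wpM2r // subr_ge0 ltW.
nra.
Qed.

Lemma existsK (p : R) : exists K, `|q ^+ K * p| <= (1 - q) / 2.
Proof.
have hq0 := q0; have hq1 := q1.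
have c0 : 0 < 1 - q by lra.
have hp : 0 <= 2 * `|p| / ((1 - q) ^+ 2) by rewrite divr_ge0 // ?exprn_ge0 // ?mulr_ge0 // ltW.
have := archi_boundP hp; set K := Num.Def.archi_bound _ => hK.
exists K.
rewrite normrM ger0_norm ?xq_ge0 //.
have hK2 : 2 * `|p| <= K%:R * (1 - q) ^+ 2.
  by rewrite -ler_pdivrMr ?exprn_gt0 // ltW.
have := bern K; have := xq_ge0 K => x0 hb.
have np := normr_ge0 p.
have e : 2 * `|p| <= (1 - q) * (1 + K%:R * (1 - q)).
  by rewrite expr2 in hK2; nra.
have : q ^+ K * (2 * `|p|) <= q ^+ K * ((1 - q) * (1 + K%:R * (1 - q))).
  by rewrite ler_wpM2l.
nra.
Qed.

Lemma qpoch_cvg (p : R) : cvgn (fun m => qpoch p q m).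
Proof.
have hq0 := q0; have hq1 := q1.
have [K hK] := existsK p.
have [hc _] := Qconv hK.
apply/cvg_ex; exists (qpoch p q K * limn (fun m => qpoch (q ^+ K * p) q m)).
rewrite -(cvg_shiftn K).
have -> : (fun n => qpoch p q (n + K)) = (fun n => qpoch p q K * qpoch (q ^+ K * p) q n).
  by apply/funext => n; rewrite addnC qpochD.
by apply: cvgMr; apply: hc.
Qed.

Lemma qpoch_inf_shift (p : R) n : qpoch_inf p q = qpoch p q n * qpoch_inf (q ^+ n * p) q.
Proof.
have hq0 := q0; have hq1 := q1.
rewrite /qpoch_inf; apply: cvg_lim => //.
rewrite -(cvg_shiftn n).
have -> : (fun k => qpoch p q (k + n)) = (fun k => qpoch p q n * qpoch (q ^+ n * p) q k).
  by apply/funext => k; rewrite addnC qpochD.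
by apply: cvgMr; apply: qpoch_cvg.
Qed.

Lemma qpoch_inf_neq0 (p : R) : (forall k, q ^+ k * p != 1) -> qpoch_inf p q != 0.
Proof.
have hq0 := q0; have hq1 := q1.
move=> h; have [K hK] := existsK p.
have [_ hl] := Qconv hK.
rewrite (qpoch_inf_shift p K) mulf_neq0 ?qpoch_neq0 //.
by rewrite /qpoch_inf gt_eqF.
Qed.

End QP.
Arguments qpochS {R q}.
Arguments qpoch0 {R q}.
Arguments qpochD {R q}.
Arguments qpoch_neq0 {R q}.
Arguments xq_ge0 {R q}.
Arguments xq_le1 {R q}.
Arguments Qpos_low {R q}.
Arguments Qpos_half {R q}.
Arguments Qpos_noninc {R q}.
Arguments Qneg_ge1 {R q}.
Arguments Qneg_nondec {R q}.
Arguments Qneg_prod {R q}.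
Arguments Qneg_up {R q}.
Arguments Qconv {R q}.
Arguments bern {R q}.
Arguments existsK {R q}.
Arguments qpoch_cvg {R q}.
Arguments qpoch_inf_shift {R q}.
Arguments qpoch_inf_neq0 {R q}.

Section FF.
Variable R : realType.
Variables q t : R.
Hypothesis q0 : 0 < q.
Hypothesis q1 : q < 1.
Hypothesis t0 : t != 0.

Lemma ff_shift (u : R) n : ff q t u =
  qpoch (t * u) q n / qpoch (q * u) q n * ff q t (q ^+ n * u).
Proof.
rewrite /ff (qpoch_inf_shift q0 q1 (t * u) n) (qpoch_inf_shift q0 q1 (q * u) n).
rewrite (mulrCA (q ^+ n) t) (mulrCA (q ^+ n) q) invfM.
by rewrite mulrACA.
Qed.

Definition good (x : R) := forall k, q ^+ k * x != 1.

Lemma good_shift (x : R) n : good x -> good (q ^+ n * x).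
Proof. by move=> h k; rewrite mulrA -exprD. Qed.

Lemma ff_neq0 (u : R) : good (t * u) -> good (q * u) -> ff q t u != 0.
Proof.
move=> h1 h2; rewrite /ff; apply: mulf_neq0; rewrite ?invr_eq0; exact: (qpoch_inf_neq0 q0 q1).
Qed.

Definition Yt (th : nat) (u v : R) :=
  (qpoch (q * v) q th / qpoch (t * v) q th) * (qpoch (t * u) q th / qpoch (q * u) q th).

Lemma term_eq (u v : R) th : good (t * u) -> good (q * u) -> good (t * v) -> good (q * v) ->
  ff q t u * ff q t (q ^+ th * v) / (ff q t (q ^+ th * u) * ff q t v) = Yt th u v.
Proof.
move=> hu1 hu2 hv1 hv2.
have F1 : ff q t (q ^+ th * u) != 0.
  by apply: ff_neq0; rewrite mulrCA; apply: good_shift.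
have F2 : ff q t (q ^+ th * v) != 0.
  by apply: ff_neq0; rewrite mulrCA; apply: good_shift.
have P1 := qpoch_neq0 q0 q1 _ th hu2. have P2 := qpoch_neq0 q0 q1 _ th hv1.
have P3 := qpoch_neq0 q0 q1 _ th hv2. have P4 := qpoch_neq0 q0 q1 _ th hu1.
rewrite (ff_shift u th) (ff_shift v th) /Yt.
field.
by rewrite ?F1 ?F2 ?P1 ?P2 ?P3 ?P4.
Qed.

Lemma Yt_same (u : R) th : good (t * u) -> good (q * u) -> Yt th u u = 1.
Proof.
move=> hu1 hu2; rewrite /Yt.
have P1 := qpoch_neq0 q0 q1 _ th hu2. have P4 := qpoch_neq0 q0 q1 _ th hu1.
by field; rewrite P1 P4.
Qed.

End FF.

Section Comb.
Variable R : realType.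

Lemma trunc (G : nat -> nat -> R) m n : (m <= n)%N ->
  (forall i j, (0 < i)%N -> (i <= j)%N -> (m < j)%N -> (j <= n)%N -> G i j = 1) ->
  \prod_(1 <= i < n.+1) \prod_(i <= j < n.+1) G i j =
  \prod_(1 <= i < m.+1) \prod_(i <= j < m.+1) G i j.
Proof.
move=> mn; rewrite -(subnKC mn); move: (n - m)%N => d {n mn}.
elim: d => [|d IH] hG; first by rewrite addn0.
rewrite -IH; last by move=> i j i0 ij mj jn; apply: hG => //; lia.
rewrite addnS big_nat_recr /=; last by lia.
rewrite big_nat1 hG ?mulr1; try lia.
apply: eq_big_nat => i /andP[i1 i2].
rewrite big_nat_recr /=; last by lia.
by rewrite hG ?mulr1 //; lia.
Qed.

Lemma plen_prop N n (mu : nat -> nat) : (n < N)%N ->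
  (forall i, (0 < i)%N -> (mu i.+1 <= mu i)%N) ->
  (forall i, (n < i)%N -> mu i = 0%N) ->
  (plen N mu <= n)%N /\ (forall i, (plen N mu < i)%N -> mu i = 0%N).
Proof.
move=> nN hdec hz.
have ex : exists i, (0 < i)%N && (mu i == 0%N).
  by exists n.+1; rewrite hz.
case: (ex_minnP ex) => i0 /andP[i00 /eqP hi0] hmin.
have i0n : (i0 <= n.+1)%N by apply: hmin; rewrite hz.
have low : forall i, (0 < i)%N -> (i < i0)%N -> mu i != 0%N.
  move=> i i1 ii0; apply/negP => /eqP h.
  have := hmin i; rewrite i1 h eqxx /= => /(_ isT); lia.
have high : forall d, mu (i0 + d)%N = 0%N.
  elim=> [|d IH]; first by rewrite addn0.
  have := hdec (i0 + d)%N; rewrite addnS IH; lia.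
have pl : plen N mu = (i0 - 1)%N.
  rewrite /plen (big_cat_nat (n := i0)) /=; try lia.
  rewrite (eq_big_nat _ _ (F2 := fun _ => 1%N)); last first.
    by move=> i /andP[i1 i2]; rewrite low.
  rewrite sum_nat_const_nat big1_seq ?muln1 ?addn0 //.
  move=> i /andP[_]; rewrite mem_index_iota => /andP[i1 i2].
  by rewrite -(subnKC i1) high.
rewrite pl; split; first lia.
move=> i hi; rewrite -(subnKC (m := i0) (n := i)); first by rewrite high.
lia.
Qed.

End Comb.
Arguments Yt {R}.
Arguments good {R}.

Section Mono.
Variable R : realType.
Variables q t : R.
Hypothesis q0 : 0 < q.
Hypothesis q1 : q < 1.
Hypothesis t0 : t != 0.
Hypothesis gen : forall a b : int, (a, b) != (0, 0) -> q ^ a * t ^ b != 1.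

Definition mono (A B : int) := q ^ A * t ^ B.

Lemma qn0 : q != 0. Proof. by rewrite gt_eqF. Qed.

Lemma monoM A B C D : mono A B * mono C D = mono (A + C) (B + D).
Proof. by rewrite /mono !expfzDr ?qn0 // mulrACA. Qed.

Lemma monoV A B : (mono A B)^-1 = mono (- A) (- B).
Proof. by rewrite /mono invfM !invr_expz. Qed.

Lemma monoXn A B (n : nat) : (mono A B) ^+ n = mono (A * n) (B * n).
Proof. by rewrite /mono exprMn -!exprz_exp. Qed.

Lemma monoXz A B (z : int) : (mono A B) ^ z = mono (A * z) (B * z).
Proof. by rewrite /mono expfzMl !exprz_exp. Qed.

Lemma qE : q = mono 1 0. Proof. by rewrite /mono expr1z expr0z mulr1. Qed.
Lemma tE : t = mono 0 1. Proof. by rewrite /mono expr1z expr0z mul1r. Qed.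

Lemma mono_neq0 A B : mono A B != 0.
Proof. by rewrite /mono mulf_neq0 // expfz_neq0 ?qn0. Qed.

Lemma mono_eq A B C D : A = C -> B = D -> mono A B = mono C D.
Proof. by move=> -> ->. Qed.

Lemma mono00 : mono 0 0 = 1.
Proof. by rewrite /mono !expr0z mulr1. Qed.

Ltac monoify := rewrite ?qE ?tE; rewrite !(monoXn, monoXz, monoV, monoM).




Lemma rev_prod (F : nat -> R) n : \prod_(k < n) F k = \prod_(k < n) F (n - k.+1)%N.
Proof. by rewrite -(big_mkord xpredT F) big_rev_mkord subn0. Qed.

Lemma qpoch_refl (x : R) n : x != 0 ->
  qpoch x q n = (\prod_(k < n) (- (q ^+ k * x))) * qpoch (q ^ (1 - n%:Z) / x) q n.
Proof.
move=> x0; rewrite /qpoch (rev_prod (fun k => 1 - q ^+ k * (q ^ (1 - n%:Z) / x))).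
rewrite -big_split /=; apply: eq_bigr => k _.
have e : q ^+ (n - k.+1) * q ^ (1 - n%:Z) = (q ^+ k)^-1.
  have := ltn_ord k => hk.
  monoify; apply: mono_eq; lia.
have qk : q ^+ k != 0 by rewrite expf_neq0 // qn0.
by rewrite mulrA e; field; rewrite x0 qk.
Qed.

Lemma qpoch_ratio (x y : R) n : x != 0 -> y != 0 ->
  qpoch x q n / qpoch y q n =
  (x / y) ^+ n * (qpoch (q ^ (1 - n%:Z) / x) q n / qpoch (q ^ (1 - n%:Z) / y) q n).
Proof.
move=> x0 y0; rewrite (qpoch_refl _ n x0) (qpoch_refl _ n y0) invfM mulrACA.
congr (_ * _); rewrite -prodf_div -[in RHS](card_ord n) -prodr_const.
apply: eq_bigr => k _.
have qk : q ^+ k != 0 by rewrite expf_neq0 // qn0.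
by field; rewrite ?x0 ?y0 ?qk.
Qed.

Lemma good_mono (A B : int) : (forall k : nat, (k%:Z + A != 0) || (B != 0)) -> good q (mono A B).
Proof.
move=> h k; rewrite {1}qE monoXn monoM mul1r mul0r add0r.
by apply: gen; rewrite xpair_eqE negb_and; apply: h.
Qed.



Definition zf (n k l : nat) := t ^+ (n.+1 - k) * q ^+ l.

Lemma goods (i j : nat) (la mu : nat -> nat) :
  (i <= j)%N -> (la i.+1 <= mu i)%N ->
  let u := qt q t (mu i) (mu j) (j - i) in
  let v := qt q t (mu i) (la j.+1) (j - i) in
  [/\ good q (t * u), good q (q * u), good q (t * v) & good q (q * v)].
Proof.
move=> ij hs u v.
have e1 : t * u = mono (Posz (mu i) - Posz (mu j)) (Posz (j - i + 1)).
  by rewrite /u /qt; monoify; apply: mono_eq; lia.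
have e2 : q * u = mono (1 + Posz (mu i) - Posz (mu j)) (Posz (j - i)).
  by rewrite /u /qt; monoify; apply: mono_eq; lia.
have e3 : t * v = mono (Posz (mu i) - Posz (la j.+1)) (Posz (j - i + 1)).
  by rewrite /v /qt; monoify; apply: mono_eq; lia.
have e4 : q * v = mono (1 + Posz (mu i) - Posz (la j.+1)) (Posz (j - i)).
  by rewrite /v /qt; monoify; apply: mono_eq; lia.
rewrite e1 e2 e3 e4; split; apply: good_mono => k;
  rewrite -negb_and; apply/negP => /andP[/eqP h1 /eqP h2].
- lia.
- have ji : j = i by lia.
  by move: h1; rewrite ji; lia.
- lia.
- have ji : j = i by lia.
  by move: h1; rewrite ji; lia.
Qed.

Lemma Pterm (i j : nat) (la mu : nat -> nat) :
  (i <= j)%N -> (mu i <= la i)%N -> (la i.+1 <= mu i)%N ->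
  (ff q t (qt q t (mu i) (mu j) (j - i)) * ff q t (qt q t (la i) (la j.+1) (j - i))) /
  (ff q t (qt q t (la i) (mu j) (j - i)) * ff q t (qt q t (mu i) (la j.+1) (j - i)))
  = Yt q t (la i - mu i)%N (qt q t (mu i) (mu j) (j - i)) (qt q t (mu i) (la j.+1) (j - i)).
Proof.
move=> ij hi hs.
have [g1 g2 g3 g4] := goods _ _ la mu ij hs.
have e1 : qt q t (la i) (la j.+1) (j - i) = q ^+ (la i - mu i)%N * qt q t (mu i) (la j.+1) (j - i).
  by rewrite /qt; monoify; apply: mono_eq; lia.
have e2 : qt q t (la i) (mu j) (j - i) = q ^+ (la i - mu i)%N * qt q t (mu i) (mu j) (j - i).
  by rewrite /qt; monoify; apply: mono_eq; lia.
rewrite e1 e2; exact: term_eq.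
Qed.

Lemma Xterm (n i j : nat) (la mu : nat -> nat) :
  (i <= j)%N -> (j <= n)%N -> (mu i <= la i)%N -> (mu j <= la j)%N ->
  (qpoch (t * zf n j.+1 (la j.+1) / zf n i (la i)) q (la i - mu i) /
   qpoch (q * zf n j.+1 (la j.+1) / zf n i (la i)) q (la i - mu i)) *
  (qpoch (q * q ^- (la j - mu j) * zf n j (la j) / (t * zf n i (la i))) q (la i - mu i) /
   qpoch (q ^- (la j - mu j) * zf n j (la j) / zf n i (la i)) q (la i - mu i))
  = Yt q t (la i - mu i)%N (qt q t (mu i) (mu j) (j - i)) (qt q t (mu i) (la j.+1) (j - i)).
Proof.
move=> ij jn hi hj.
set th := (la i - mu i)%N.
set x1 := t * zf n j.+1 (la j.+1) / zf n i (la i).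
set y1 := q * zf n j.+1 (la j.+1) / zf n i (la i).
set x2 := q * q ^- (la j - mu j) * zf n j (la j) / (t * zf n i (la i)).
set y2 := q ^- (la j - mu j) * zf n j (la j) / zf n i (la i).
have ex1 : x1 = mono (Posz (la j.+1) - Posz (la i)) (Posz i - Posz j) by rewrite /x1 /zf; monoify; apply: mono_eq; lia.
have ey1 : y1 = mono (1 + Posz (la j.+1) - Posz (la i)) (Posz i - Posz j - 1) by rewrite /y1 /zf; monoify; apply: mono_eq; lia.
have ex2 : x2 = mono (1 + Posz (mu j) - Posz (la i)) (Posz i - Posz j - 1) by rewrite /x2 /zf; monoify; apply: mono_eq; lia.
have ey2 : y2 = mono (Posz (mu j) - Posz (la i)) (Posz i - Posz j) by rewrite /y2 /zf; monoify; apply: mono_eq; lia.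
rewrite (qpoch_ratio x1 y1 th); last 2 first.
- by rewrite ex1 mono_neq0.
- by rewrite ey1 mono_neq0.
rewrite (qpoch_ratio x2 y2 th); last 2 first.
- by rewrite ex2 mono_neq0.
- by rewrite ey2 mono_neq0.
have E1 : q ^ (1 - th%:Z) / x1 = q * qt q t (mu i) (la j.+1) (j - i).
  by rewrite ex1 /qt; monoify; apply: mono_eq; rewrite /th; lia.
have E2 : q ^ (1 - th%:Z) / y1 = t * qt q t (mu i) (la j.+1) (j - i).
  by rewrite ey1 /qt; monoify; apply: mono_eq; rewrite /th; lia.
have E3 : q ^ (1 - th%:Z) / x2 = t * qt q t (mu i) (mu j) (j - i).
  by rewrite ex2 /qt; monoify; apply: mono_eq; rewrite /th; lia.
have E4 : q ^ (1 - th%:Z) / y2 = q * qt q t (mu i) (mu j) (j - i).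
  by rewrite ey2 /qt; monoify; apply: mono_eq; rewrite /th; lia.
have E5 : (x1 / y1) * (x2 / y2) = 1.
  by rewrite ex1 ey1 ex2 ey2; monoify; rewrite -mono00; apply: mono_eq; lia.
rewrite E1 E2 E3 E4 mulrACA -exprMn E5 expr1n mul1r /Yt.
by [].
Qed.



Definition Pe (la mu : nat -> nat) (i j : nat) :=
  (ff q t (qt q t (mu i) (mu j) (j - i)) * ff q t (qt q t (la i) (la j.+1) (j - i))) /
  (ff q t (qt q t (la i) (mu j) (j - i)) * ff q t (qt q t (mu i) (la j.+1) (j - i))).

Definition Xe n (la mu : nat -> nat) (i j : nat) :=
  (qpoch (t * zf n j.+1 (la j.+1) / zf n i (la i)) q (la i - mu i) /
   qpoch (q * zf n j.+1 (la j.+1) / zf n i (la i)) q (la i - mu i)) *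
  (qpoch (q * q ^- (la j - mu j) * zf n j (la j) / (t * zf n i (la i))) q (la i - mu i) /
   qpoch (q ^- (la j - mu j) * zf n j (la j) / zf n i (la i)) q (la i - mu i)).

Lemma core n m (la mu : nat -> nat) : (m <= n)%N ->
  (forall i, (0 < i)%N -> (mu i <= la i)%N) ->
  (forall i, (0 < i)%N -> (la i.+1 <= mu i)%N) ->
  (forall i, (m < i)%N -> mu i = 0%N) ->
  \prod_(1 <= i < m.+1) \prod_(i <= j < m.+1) Pe la mu i j =
  \prod_(1 <= i < n.+1) \prod_(i <= j < n.+1) Xe n la mu i j.
Proof.
move=> mn hml hlm hz.
rewrite (@trunc R (Xe n la mu) m n mn); last first.
  move=> i j i0 ij mj jn.
  have hmj : mu j = 0%N by apply: hz.
  have hlj : la j.+1 = 0%N by have := hlm j (ltac:(lia)); rewrite hmj; lia.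
  have := goods i j la mu ij (hlm i i0); rewrite /= hmj hlj => -[g1 g2 _ _].
  rewrite /Xe Xterm //; last 2 first.
  - by apply: hml.
  - by apply: hml; lia.
  by rewrite hmj hlj; apply: Yt_same.
apply: eq_big_nat => i /andP[i1 i2]; apply: eq_big_nat => j /andP[j1 j2].
rewrite /Pe /Xe Pterm ?Xterm //; try lia.
- by apply: hml; lia.
- by apply: hml; lia.
- by apply: hml; lia.
- by apply: hlm; lia.
Qed.

Lemma divc1 (k c a b : R) : c != 0 -> k * (c * a) / (c * b) = k * a / b.
Proof. by move=> c0; rewrite (mulrCA k) invfM mulrACA divff // mul1r. Qed.

Lemma divc2 (k m c a b : R) : c != 0 -> k * (c * a) / (m * (c * b)) = k * a / (m * b).
Proof. by move=> c0; rewrite (mulrCA m) (mulrCA k) invfM mulrACA divff // mul1r. Qed.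

Lemma cN_ext n th (z z' : nat -> R) c : c != 0 ->
  (forall i, (0 < i)%N -> (i <= n)%N -> z' i = c * z i) ->
  cN q t n th z' = cN q t n th z.
Proof.
elim: n z z' => [|n IH] z z' c0 hz //=.
congr (_ * _).
  apply: IH => // i i0 iN; rewrite hz; [by rewrite mulrCA | lia | lia].
apply: eq_big_nat => i /andP[i1 i2]; apply: eq_big_nat => j /andP[j1 j2].
rewrite (hz j.+1) ?(hz i) ?(hz j) //; try lia.
by rewrite !divc1 // !divc2 // divc1.
Qed.

Lemma mainL N (lam : nat -> nat) (L : nat -> nat -> nat) : is_tableau N lam L ->
  forall n, (n <= N)%N ->
  \prod_(1 <= k < n.+1) psi_skew N q t (L k) (L k.-1) =
  cN q t n (tab_matrix L) (fun i => t ^+ (n - i) * q ^+ (L n i)).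
Proof.
case=> [T0 [T1 T2]].
have Fz : forall k, (k <= N)%N -> forall i, (k < i)%N -> L k i = 0%N.
  elim=> [|k IH] kN i ki; first by apply: T0; lia.
  have [_ hs] := T1 k.+1 (ltac:(lia)).
  have := (hs i.-1 (ltac:(lia))).2; rewrite /= prednK; last lia.
  by rewrite IH //; [lia | lia | lia].
elim=> [|n IH] nN.
  by rewrite big_geq.
rewrite big_nat_recr //= IH; last lia.
have [_ hs] := T1 n.+1 (ltac:(lia)).
have hml : forall i, (0 < i)%N -> (L n i <= L n.+1 i)%N by move=> i i0; exact: (hs i i0).1.
have hlm : forall i, (0 < i)%N -> (L n.+1 i.+1 <= L n i)%N by move=> i i0; exact: (hs i i0).2.
congr (_ * _).
  symmetry; apply: (cN_ext _ _ _ _ t) => // i i0 iN.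
  have := hml i i0 => hle.
  rewrite /tab_matrix /=; monoify; apply: mono_eq; lia.
have hdec : forall i, (0 < i)%N -> (L n i.+1 <= L n i)%N.
  move: nN; case: n {IH hs hml hlm} => [|n'] nN' i i0.
    by rewrite T0.
  by have [[hp _] _] := T1 n'.+1 (ltac:(lia)); apply: hp.
have nlt : (n < N)%N by lia.
have nle : (n <= N)%N by lia.
have [pm pz] := plen_prop N n (L n) nlt hdec (Fz n nle).
rewrite /psi_skew.
exact: (core n _ (L n.+1) (L n) pm hml hlm pz).
Qed.

End Mono.

Theorem lemma3p1 (R : realType) (q t : R) (N : nat) (lam : nat -> nat)
    (L : nat -> nat -> nat) :
  0 < q < 1 -> t != 0 ->
  (forall a b : int, (a, b) != (0, 0) -> q ^ a * t ^ b != 1) ->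
  (0 < N)%N ->
  is_partition lam -> (forall i, (N < i)%N -> lam i = 0%N) ->
  is_tableau N lam L ->
  psi_tab N q t L =
  cN q t N (tab_matrix L) (fun i => t ^+ (N - i) * q ^+ (lam i)).
Proof.
move=> /andP[q0 q1] t0 gen N0 hpart hlamz htab.
have := @mainL R q t q0 q1 t0 gen N lam L htab N (leqnn N).
rewrite /psi_tab => ->.
case: htab => _ [_ T2].
apply: (@cN_ext R q t q0 q1 t0 N _ _ _ 1 (oner_neq0 _)) => i i0 iN.
by rewrite mul1r T2.
Qed.
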